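(* Let $u\in V$ be quasiprimary of weight $N\ge1$, let $f_0,\dots,f_{2N-2}$ be Laurent series, $\psi^{(0)}_N(x,y)=\frac1{x-y}+\sum_{\ell=0}^{2N-2}f_\ell(x)y^\ell$ and $\mathcal E^j_t(y)=\sum_{\ell=0}^{2N-2}\partial^{(t)}f_\ell(y)\,\partial_y^{(j)}(y^\ell)$. Then for all $t\ge0$ and $v_1,\dots,v_n\in V$, \begin{align*} Z^{(0)}(u(-t-1)v_1,y_1;v_2,y_2;\dots;v_n,y_n)=&\sum_{j\ge0}\mathcal E^j_t(y_1)\,Z^{(0)}(u(j)v_1,y_1;v_2,y_2;\dots;v_n,y_n)\\ &+\sum_{k=2}^n\sum_{j\ge0}\partial^{(t,j)}\psi^{(0)}_N(y_1,y_k)\,Z^{(0)}(v_1,y_1;\dots;u(j)v_k,y_k;\dots;v_n,y_n). \end{align*}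
   Context: $V=\bigoplus_{n\ge0}V_n$ is a simple, self-dual vertex operator algebra (VOA) of strong CFT type ($V_0=\mathbb C\mathbb 1$, $L(1)V_1=0$), with vertex operators $Y(u,z)=\sum_{n\in\mathbb Z}u(n)z^{-n-1}$, Virasoro modes $L(n)$, and $\mathrm{wt}(v)=n$ for $v\in V_n$. A vector $u$ is quasiprimary if $L(1)u=0$. $\langle\cdot,\cdot\rangle$ is the unique invariant nondegenerate bilinear form on $V$ with $\langle\mathbb 1,\mathbb 1\rangle=1$. The genus zero $n$-point function is $Z^{(0)}(v_1,y_1;\dots;v_n,y_n)=\langle \mathbb 1,Y(v_1,y_1)\cdots Y(v_n,y_n)\mathbb 1\rangle$. Notation: $\partial^{(j)}=\frac1{j!}\partial^j$, $\partial^{(i,j)}F(x,y)=\partial_x^{(i)}\partial_y^{(j)}F(x,y)$. *)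

(* Defs.v *)
From HB Require Import structures.
From mathcomp Require Import all_boot all_order all_algebra.
From mathcomp Require Import boolp classical_sets fsbigop reals.
From mathcomp Require Import complex.

Set Implicit Arguments.
Unset Strict Implicit.
Unset Printing Implicit Defensive.

Import Order.TTheory GRing.Theory Num.Theory.
Local Open Scope ring_scope.

(* support.  [fsum a] is the sum of the finitely many non-zero terms of a. *)
(* (fsbigop convention: it is 0 if the support is infinite; every fsum      *)
(* below has provably finite support.)                        *)
Definition fsum (M : nmodType) (I : choiceType) (a : I -> M) : M :=
  (\sum_(i \in [set: I]) a i)%R.

Section VOADefs.
Variable C : fieldType.

Definition binz (x : int) (k : nat) : C :=
  (\prod_(i < k) (x%:~R - i%:R)) / (k`!)%:R.

(* Vertex operator algebras (Lepowsky-Li / FLM definition), with modes     *)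
(* Y(u,z) = \sum_n u(n) z^{-n-1}; here  vmode u n w = u(n) w.              *)
(* L(n) = omega(n+1).                                                       *)
Record VOA := {
  vspace :> lmodType C;
  vmode : vspace -> int -> vspace -> vspace;
  vacuum : vspace;
  conformal : vspace;
  central_charge : C;
  vmode_linl : forall (n : int) (w : vspace) (a : C) (u1 u2 : vspace),
      vmode (a *: u1 + u2) n w = a *: vmode u1 n w + vmode u2 n w;
  vmode_linr : forall (u : vspace) (n : int) (a : C) (w1 w2 : vspace),
      vmode u n (a *: w1 + w2) = a *: vmode u n w1 + vmode u n w2;
  vmode_trunc : forall u w : vspace,
      exists N : int, forall n : int, N <= n -> vmode u n w = 0;
  vacuum_mode : forall (n : int) (w : vspace),
      vmode vacuum n w = if n == -1 then w else 0;
  creation_prop : forall u : vspace,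
      vmode u (-1) vacuum = u /\ (forall n : int, 0 <= n -> vmode u n vacuum = 0);
  (* Jacobi identity, in the form of the Borcherds identity *)
  borcherds : forall (u v w : vspace) (p q r : int),
      fsum (fun i : nat => binz p i *: vmode (vmode u (r + i%:Z) v) (p + q - i%:Z) w)
      = fsum (fun i : nat => ((-1) ^+ i * binz r i) *:
              (vmode u (p + r - i%:Z) (vmode v (q + i%:Z) w)
               - (-1) ^+ `|r|%N *: vmode v (q + r - i%:Z) (vmode u (p + i%:Z) w)));
  virasoro : forall (m n : int) (w : vspace),
      vmode conformal (m + 1) (vmode conformal (n + 1) w)
      - vmode conformal (n + 1) (vmode conformal (m + 1) w)
      = (m - n)%:~R *: vmode conformal (m + n + 1) w
        + (if m + n == 0 then ((m ^+ 3 - m)%:~R / 12%:R * central_charge) *: w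
           else 0);
  (* L(-1)-derivative property: Y(L(-1)u, z) = d/dz Y(u, z) *)
  translation : forall (u : vspace) (n : int) (w : vspace),
      vmode (vmode conformal 0 u) n w = - (n%:~R) *: vmode u (n - 1) w;
  (* V = \oplus_{n >= 0} V_n with V_n the L(0)-eigenspace of eigenvalue n *)
  grading : forall w : vspace, exists s : seq (nat * vspace),
      (forall p, p \in s -> vmode conformal 1 p.2 = (p.1)%:R *: p.2)
      /\ w = \sum_(p <- s) p.2;
  fin_dim : forall k : nat, exists b : seq vspace,
      forall w, vmode conformal 1 w = k%:R *: w ->
        exists c : nat -> C, w = \sum_(i < size b) c i *: b`_i;
  conformal_wt : vmode conformal 1 conformal = 2%:R *: conformal
}.

Arguments vmode : clear implicits.
Arguments vacuum : clear implicits.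
Arguments conformal : clear implicits.
Arguments central_charge : clear implicits.

Variable V : VOA.

Definition Lv (n : int) (w : V) : V := vmode V (conformal V) (n + 1) w.

Definition has_weight (k : nat) (u : V) : Prop := Lv 0 u = k%:R *: u.

Definition quasiprimary (u : V) : Prop := Lv 1 u = 0.

Definition strong_CFT_type : Prop :=
  (forall w : V, has_weight 0 w -> exists a : C, w = a *: vacuum V)
  /\ (forall w : V, has_weight 1 w -> Lv 1 w = 0).

Definition simple_VOA : Prop :=
  (exists w : V, w != 0) /\
  forall I : V -> Prop,
    I 0 -> (forall (a : C) (x y : V), I x -> I y -> I (a *: x + y)) ->
    (forall (u : V) (n : int) (w : V), I w -> I (vmode V u n w)) ->
    (forall (u : V) (n : int) (w : V), I w -> I (vmode V w n u)) ->
    (forall w, I w -> w = 0) \/ (forall w, I w).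

(* invariant bilinear form:
   <Y(u,z)v, w> = <v, Y(e^{zL(1)} (-z^{-2})^{L(0)} u, z^{-1}) w>,
   written in modes for homogeneous u of weight k. *)
Definition invariant_bilinear_form (B : V -> V -> C) : Prop :=
  (forall (a : C) (x y z : V), B (a *: x + y) z = a * B x z + B y z) /\
  (forall (a : C) (x y z : V), B z (a *: x + y) = a * B z x + B z y) /\
  (forall (k : nat) (u : V), has_weight k u ->
     forall (n : int) (v w : V),
       B (vmode V u n v) w =
       (-1) ^+ k * fsum (fun i : nat =>
          (i`!%:R)^-1 * B v (vmode V (iter i (Lv 1) u)
                                  (2 * k%:Z - n - i%:Z - 2) w))).

Definition nondegenerate_form (B : V -> V -> C) : Prop :=
  forall x : V, (forall y : V, B x y = 0) -> x = 0.

(* genus zero n-point function  <1, Y(v_0,y_0) ... Y(v_{n-1},y_{n-1}) 1>,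
   as a formal series in y_0, ..., y_{n-1} (the expansion in
   |y_0| > ... > |y_{n-1}|):  Z B vs e  is the coefficient of
   \prod_i y_i^{e i}, i.e. <1, v_0(-e_0-1) ... v_{n-1}(-e_{n-1}-1) 1>. *)
Definition applyModes (n : nat) (vs : 'I_n -> V) (ms : 'I_n -> int) : V :=
  foldr (fun i acc => vmode V (vs i) (ms i) acc) (vacuum V) (enum 'I_n).

Definition Z0 (B : V -> V -> C) (n : nat) (vs : 'I_n -> V)
  : ('I_n -> int) -> C :=
  fun e => B (vacuum V) (applyModes vs (fun i => - e i - 1)).

End VOADefs.

Arguments vmode {C} _ _ _ _.
Arguments vacuum {C} _.
Arguments conformal {C} _.
Arguments central_charge {C} _.

Definition upd (I : eqType) (T : Type) (g : I -> T) (i : I) (x : T) : I -> T :=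
  fun j => if j == i then x else g j.

Section Series.
Variable C : fieldType.

Definition laurent (g : int -> C) : Prop :=
  exists M : int, forall m : int, m < M -> g m = 0.

(* divided derivative  \partial^{(t)} = (1/t!) d^t/dy^t  on Laurent series *)
Definition derL (t : nat) (g : int -> C) : int -> C :=
  fun e => binz C (e + t%:Z) t * g (e + t%:Z).

Definition monoL (l : int) : int -> C := fun e => (e == l)%:R.

Definition mulL (g h : int -> C) : int -> C :=
  fun e => fsum (fun a : int => g a * h (e - a)).

(* two-variable series F(x,y) = \sum F a b x^a y^b *)
(* expansion of 1/(x-y) in |x| > |y| : \sum_{m>=0} x^{-m-1} y^m *)
Definition inv_xy (a b : int) : C := if (0 <= b) && (a == - b - 1) then 1 else 0.

Definition der2 (t j : nat) (F : int -> int -> C) : int -> int -> C :=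
  fun a b => binz C (a + t%:Z) t * binz C (b + j%:Z) j * F (a + t%:Z) (b + j%:Z).

Definition psi0 (N : nat) (f : nat -> int -> C) : int -> int -> C :=
  fun a b => inv_xy a b + \sum_(l < N.*2.-1) f l a * monoL l%:Z b.

Definition calE (N : nat) (f : nat -> int -> C) (t j : nat) : int -> C :=
  fun e => \sum_(l < N.*2.-1) mulL (derL t (f l)) (derL j (monoL l%:Z)) e.

Definition mul1 (n : nat) (i : 'I_n) (g : int -> C) (S : ('I_n -> int) -> C)
  : ('I_n -> int) -> C :=
  fun e => fsum (fun a : int => g a * S (upd e i (e i - a))).

Definition mul2 (n : nat) (i k : 'I_n) (F : int -> int -> C)
  (S : ('I_n -> int) -> C) : ('I_n -> int) -> C :=
  fun e => fsum (fun ab : int * int =>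
     F ab.1 ab.2 * S (upd (upd e i (e i - ab.1)) k (e k - ab.2))).

End Series.

(* Main.v *)
Require Import Defs.
From HB Require Import structures.
From mathcomp Require Import all_boot all_order all_algebra.
From mathcomp Require Import boolp classical_sets fsbigop reals.
From mathcomp Require Import complex.
From mathcomp.algebra_tactics Require Import ring.
From mathcomp.zify Require Import zify.
Import Order.TTheory GRing.Theory Num.Theory.
Local Open Scope ring_scope.
Local Open Scope classical_set_scope.
Set Implicit Arguments.
Unset Strict Implicit.
Unset Printing Implicit Defensive.
Section Fsum.
Variables (M : nmodType) (I : choiceType).

Lemma fsumE (r : seq I) (a : I -> M) : uniq r ->
  (forall x, x \notin r -> a x = 0) -> fsum a = \sum_(x <- r) a x.
Proof.
move=> ur ha; rewrite /fsum.
have := @bigfs M 0 +%R I r predT a ur (fun i _ => ha i).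
have -> : [set` (predT : {pred I})] = [set: I].
  by apply/seteqP; split => x //=.
by move=> <-.
Qed.

Lemma fsumE' (r : seq I) (a : I -> M) :
  (forall x, x \notin r -> a x = 0) -> fsum a = \sum_(x <- undup r) a x.
Proof.
move=> ha; apply: fsumE; first exact: undup_uniq.
by move=> x; rewrite mem_undup; apply: ha.
Qed.

Lemma fsum_eq (a b : I -> M) : (forall x, a x = b x) -> fsum a = fsum b.
Proof. by move=> h; rewrite (funext h). Qed.

Lemma fsum0 (a : I -> M) : (forall x, a x = 0) -> fsum a = 0.
Proof. by move=> h; rewrite (fsumE (r := [::])) ?big_nil// => x _; apply: h. Qed.

End Fsum.

Lemma fsum_nat (M : nmodType) (K : nat) (a : nat -> M) :
  (forall i, (K <= i)%N -> a i = 0) -> fsum a = \sum_(i < K) a i.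
Proof.
move=> h; rewrite (fsumE (r := iota 0 K)) ?iota_uniq//.
  by rewrite -(big_mkord xpredT) /index_iota subn0.
by move=> x; rewrite mem_iota add0n /= => /negbTE hx; apply: h; rewrite leqNgt hx.
Qed.

Definition irange (lo : int) (K : nat) : seq int := [seq lo + i%:Z | i <- iota 0 K].

Lemma irange_uniq lo K : uniq (irange lo K).
Proof.
rewrite map_inj_uniq ?iota_uniq// => x y /addrI; by case.
Qed.

Lemma mem_irange lo K x : (x \in irange lo K) = (lo <= x) && (x < lo + K%:Z).
Proof.
apply/mapP/andP => [[i hi ->]|[h1 h2]].
  move: hi; rewrite mem_iota add0n /= => hi; split; first by rewrite lerDl.
  by rewrite ltrD2l ltz_nat.
exists `|x - lo|%N; last first.
  by rewrite gez0_abs ?subr_ge0// addrCA subrr addr0.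
rewrite mem_iota add0n /=. rewrite -ltz_nat gez0_abs ?subr_ge0//.
by rewrite ltrBlDl.
Qed.

Lemma fsum_irange (M : nmodType) lo K (a : int -> M) :
  (forall x, ~~ ((lo <= x) && (x < lo + K%:Z)) -> a x = 0) ->
  fsum a = \sum_(x <- irange lo K) a x.
Proof.
move=> h; apply: fsumE; first exact: irange_uniq.
by move=> x; rewrite mem_irange; apply: h.
Qed.

Lemma big_irange (M : nmodType) lo K (a : int -> M) :
  \sum_(x <- irange lo K) a x = \sum_(i < K) a (lo + i%:Z).
Proof. by rewrite big_map -(big_mkord xpredT (fun i => a (lo + i%:Z))) /index_iota subn0. Qed.

Lemma fsum_shift (M : nmodType) (d : int) (a : int -> M) :
  fsum (fun x => a (x + d)) = fsum a.
Proof.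
rewrite /fsum (reindex_fsbigT (fun x : int => x + d) a) //.
by exists (fun x => x - d) => x; rewrite ?addrK ?subrK.
Qed.
Section Binz.
Variable C : numFieldType.

Lemma prod_ffact (k j : nat) :
  \prod_(i < j) ((k%:R : C) - i%:R) = (k ^_ j)%:R.
Proof.
elim: j => [|j IH]; first by rewrite big_ord0 ffactn0.
rewrite big_ord_recr /= IH ffactnSr.
case: (leqP j k) => hjk; first by rewrite natrM natrB.
by rewrite ffact_small // !mul0r.
Qed.

Lemma binz_nat (k j : nat) : binz C k%:Z j = 'C(k, j)%:R.
Proof.
rewrite /binz.
have -> : \prod_(i < j) ((k%:Z)%:~R - i%:R) = \prod_(i < j) ((k%:R : C) - i%:R).
  by apply: eq_bigr => i _; rewrite pmulrn.
rewrite prod_ffact -bin_ffact natrM mulfK //.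
by rewrite pnatr_eq0 -lt0n fact_gt0.
Qed.

Lemma binz0 j : binz C 0 j = (j == 0)%N%:R.
Proof. by rewrite (binz_nat 0) bin0n. Qed.

Lemma prod_rise (s t : nat) :
  \prod_(i < t) ((s.+1 + i)%:R : C) = ((s + t) ^_ t)%:R.
Proof.
elim: t => [|t IH]; first by rewrite big_ord0 ffactn0.
rewrite big_ord_recr /= IH addnS ffactSS natrM mulrC.
by rewrite addSn.
Qed.

Lemma binz_neg (s t : nat) : binz C (- s%:Z - 1) t = (-1) ^+ t * 'C(s + t, t)%:R.
Proof.
rewrite /binz.
have -> : \prod_(i < t) ((- s%:Z - 1)%:~R - i%:R) = \prod_(i < t) (-1 * ((s.+1 + i)%:R : C)).
  apply: eq_bigr => i _; rewrite natrD -addn1 natrD mulN1r.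
  ring.
rewrite big_split /= prodr_const card_ord prod_rise.
have -> : ((s + t) ^_ t = 'C(s + t, t) * t`!)%N by rewrite bin_ffact.
by rewrite natrM -mulrA mulfK // pnatr_eq0 -lt0n fact_gt0.
Qed.
End Binz.
Section VOABasic.
Variables (C : numFieldType) (V : VOA C).

Lemma xx0 (M : zmodType) (x : M) : x = x + x -> x = 0.
Proof. by move=> h; have := congr1 (fun y => y - x) h; rewrite subrr addrK. Qed.

Lemma vmode_addr u n (w1 w2 : V) : vmode V u n (w1 + w2) = vmode V u n w1 + vmode V u n w2.
Proof. by have := vmode_linr u n 1 w1 w2; rewrite !scale1r. Qed.
Lemma vmode0r u n : vmode V u n 0 = 0 :> V.
Proof. by apply: xx0; rewrite -vmode_addr addr0. Qed.
Lemma vmode_scaler u n (a : C) (w : V) : vmode V u n (a *: w) = a *: vmode V u n w.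
Proof. by have := vmode_linr u n a w 0; rewrite !addr0 vmode0r addr0. Qed.
Lemma vmode_addl (u1 u2 : V) n w : vmode V (u1 + u2) n w = vmode V u1 n w + vmode V u2 n w.
Proof. by have := vmode_linl n w 1 u1 u2; rewrite !scale1r. Qed.
Lemma vmode0l n (w : V) : vmode V 0 n w = 0.
Proof. by apply: xx0; rewrite -vmode_addl addr0. Qed.
Lemma vmode_scalel (a : C) (u : V) n w : vmode V (a *: u) n w = a *: vmode V u n w.
Proof. by have := vmode_linl n w a u 0; rewrite !addr0 vmode0l addr0. Qed.

Lemma vmode_sumr (I : Type) (r : seq I) (P : pred I) (F : I -> V) u n :
  vmode V u n (\sum_(i <- r | P i) F i) = \sum_(i <- r | P i) vmode V u n (F i).
Proof. exact: (big_morph _ (vmode_addr u n) (vmode0r u n)). Qed.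
Lemma vmode_suml (I : Type) (r : seq I) (P : pred I) (F : I -> V) n w :
  vmode V (\sum_(i <- r | P i) F i) n w = \sum_(i <- r | P i) vmode V (F i) n w.
Proof. exact: (big_morph (fun u => vmode V u n w) (fun x y => vmode_addl x y n w) (vmode0l n w)). Qed.

Lemma vmode_subr u n (w1 w2 : V) : vmode V u n (w1 - w2) = vmode V u n w1 - vmode V u n w2.
Proof. by rewrite -scaleN1r vmode_addr vmode_scaler scaleN1r. Qed.

Variable B : V -> V -> C.
Hypothesis hB : invariant_bilinear_form B.

Lemma Baddr z (x y : V) : B z (x + y) = B z x + B z y.
Proof. by have := (hB.2.1 1 x y z); rewrite scale1r mul1r. Qed.
Lemma B0r z : B z 0 = 0.
Proof. by apply: xx0; rewrite -Baddr addr0. Qed.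
Lemma Bscaler z a (x : V) : B z (a *: x) = a * B z x.
Proof. by have := (hB.2.1 a x 0 z); rewrite !addr0 B0r addr0. Qed.
Lemma Bsumr (I : Type) (r : seq I) (P : pred I) (F : I -> V) z :
  B z (\sum_(i <- r | P i) F i) = \sum_(i <- r | P i) B z (F i).
Proof. exact: (big_morph _ (Baddr z) (B0r z)). Qed.
Lemma Bsubr z (x y : V) : B z (x - y) = B z x - B z y.
Proof. by rewrite -scaleN1r Baddr Bscaler mulN1r. Qed.
Lemma B0l z : B 0 z = 0.
Proof. by apply: xx0; have := (hB.1 1 0 0 z); rewrite scale1r addr0 mul1r. Qed.

Lemma iter_qp (u : V) : quasiprimary u -> forall i, iter i.+1 (@Lv _ V 1) u = 0.
Proof.
move=> hq; elim=> [|i IH]; first exact: hq.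
by rewrite iterS IH /Lv vmode0r.
Qed.

Lemma B_vac_u (N : nat) (u : V) (m : int) (w : V) :
  has_weight N u -> quasiprimary u -> m <= 2 * N%:Z - 2 ->
  B (vacuum V) (vmode V u m w) = 0.
Proof.
move=> hw hq hm.
have := hB.2.2 N u hw (2 * N%:Z - 2 - m) (vacuum V) w.
rewrite (proj2 (creation_prop u)) ?subr_ge0 // B0l.
rewrite (fsumE (r := [:: 0%N])) //; last first.
  case=> [//|i] _; by rewrite iter_qp // vmode0l B0r mulr0.
rewrite big_seq1 /= fact0 invr1 mul1r.
have -> : 2 * N%:Z - (2 * N%:Z - 2 - m) - 0%:Z - 2 = m by ring.
move/eqP; rewrite eq_sym mulf_eq0 signr_eq0 /= => /eqP //.
Qed.
End VOABasic.
Section Borch.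
Variables (C : numFieldType) (V : VOA C).

Lemma commut (u v w : V) (i : nat) (m : int) :
  vmode V u i%:Z (vmode V v m w) = vmode V v m (vmode V u i%:Z w)
   + \sum_(j < i.+1) 'C(i, j)%:R *: vmode V (vmode V u j%:Z v) (i%:Z + m - j%:Z) w.
Proof.
have := borcherds u v w i%:Z m 0.
rewrite (fsum_nat (K := i.+1)); last first.
  by move=> k hk; rewrite binz_nat bin_small // scale0r.
rewrite (fsumE (r := [:: 0%N])) //; last first.
  by case=> [//|k] _; rewrite binz0 /= mulr0 scale0r.
rewrite big_seq1 /= binz0 /= mulr1 expr0 scale1r !addr0.
move=> h.
have -> : \sum_(j < i.+1) 'C(i, j)%:R *: vmode V (vmode V u j%:Z v) (i%:Z + m - j%:Z) w
  = \sum_(j < i.+1) binz C i j *: vmode V (vmode V u (0 + j%:Z) v) (i%:Z + m - j%:Z) w.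
  by apply: eq_bigr => j _; rewrite binz_nat add0r.
by rewrite h scale1r addrC subrK.
Qed.

Lemma assoc (u v w : V) (r q : int) :
  vmode V (vmode V u r v) q w = fsum (fun k : nat => ((-1) ^+ k * binz C r k) *:
    (vmode V u (r - k%:Z) (vmode V v (q + k%:Z) w)
     - (-1) ^+ `|r|%N *: vmode V v (q + r - k%:Z) (vmode V u k%:Z w))).
Proof.
have := borcherds u v w 0 q r.
rewrite (fsumE (r := [:: 0%N])) //; last first.
  by case=> [//|k] _; rewrite binz0 /= scale0r.
rewrite big_seq1 /= binz0 /= scale1r addr0 add0r subr0 => ->.
by apply: fsum_eq => k; rewrite !add0r.
Qed.
End Borch.
Section PLs.
Variables (C : numFieldType) (V : VOA C) (I : eqType).
Implicit Types (vs : I -> V) (ms : I -> int) (l : seq I) (k : I).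

Definition PL (vs : I -> V) (ms : I -> int) (l : seq I) : V :=
  foldr (fun k acc => vmode V (vs k) (ms k) acc) (vacuum V) l.

Lemma PL_eq vs ms vs' ms' l : {in l, vs =1 vs'} -> {in l, ms =1 ms'} ->
  PL vs ms l = PL vs' ms' l.
Proof.
elim: l => [//|k l IH] hv hm /=.
rewrite /PL /= -/(PL vs ms l) -/(PL vs' ms' l).
rewrite hv ?hm ?mem_head // IH // => x hx; [apply: hv|apply: hm]; by rewrite in_cons hx orbT.
Qed.

Lemma PL_cons vs ms k l : PL vs ms (k :: l) = vmode V (vs k) (ms k) (PL vs ms l).
Proof. by []. Qed.

Lemma foldr_vm0 vs ms l : foldr (fun k acc => vmode V (vs k) (ms k) acc) 0 l = 0.
Proof. by elim: l => [//|k l IH] /=; rewrite IH vmode0r. Qed.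

Lemma PL_zero vs ms l1 k l2 : vmode V (vs k) (ms k) (PL vs ms l2) = 0 ->
  PL vs ms (l1 ++ k :: l2) = 0.
Proof. by move=> h; rewrite /PL foldr_cat /= -/(PL vs ms l2) h foldr_vm0. Qed.

Lemma upd_neq (T : Type) (g : I -> T) k x z : z != k -> upd g k x z = g z.
Proof. by rewrite /upd => /negbTE ->. Qed.
Lemma upd_eq (T : Type) (g : I -> T) k x : upd g k x k = x.
Proof. by rewrite /upd eqxx. Qed.

Lemma PL_upd_notin vs ms k x y l : k \notin l ->
  PL (upd vs k x) (upd ms k y) l = PL vs ms l.
Proof.
move=> hk; apply: PL_eq => z hz; apply: upd_neq; apply: contraNneq hk => <- //.
Qed.

Lemma PL_comm (u : V) (i : nat) vs ms l : uniq l ->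
  vmode V u i%:Z (PL vs ms l) = \sum_(k <- l) \sum_(j < i.+1) 'C(i, j)%:R *:
     PL (upd vs k (vmode V u j%:Z (vs k))) (upd ms k (ms k + i%:Z - j%:Z)) l.
Proof.
elim: l => [|k l IH].
  by rewrite big_nil /PL /= (proj2 (creation_prop u)).
rewrite cons_uniq => /andP[hk hl]; rewrite big_cons PL_cons commut IH // vmode_sumr addrC.
congr (_ + _).
  apply: eq_bigr => j _; rewrite PL_cons !upd_eq PL_upd_notin //.
  by rewrite (addrC i%:Z).
apply: eq_big_seq => k' hk'.
have hne : k != k' by apply: contraNneq hk => ->.
rewrite vmode_sumr; apply: eq_bigr => j _.
by rewrite vmode_scaler PL_cons !upd_neq.
Qed.
End PLs.
Definition ev (P : int -> Prop) := exists K : nat, forall x : int, K%:Z <= x -> P x.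

Lemma ev_weaken (P Q : int -> Prop) : (forall x, P x -> Q x) -> ev P -> ev Q.
Proof. by move=> h [K hK]; exists K => x hx; apply: h; apply: hK. Qed.

Lemma ev_seq (T : eqType) (s : seq T) (P : T -> int -> Prop) :
  (forall x, x \in s -> ev (P x)) -> ev (fun y => forall x, x \in s -> P x y).
Proof.
elim: s => [|a s IH] h; first by exists 0%N.
have [K1 h1] := h a (mem_head a s).
have [K2 h2] := IH (fun x hx => h x (@mem_behead _ (a :: s) x hx)).
exists (maxn K1 K2) => y hy x; rewrite in_cons => /orP[/eqP ->|hx].
  by apply: h1; apply: le_trans hy; rewrite lez_nat leq_maxl.
by apply: h2 => //; apply: le_trans hy; rewrite lez_nat leq_maxr.
Qed.

Lemma ev_and (P Q : int -> Prop) : ev P -> ev Q -> ev (fun x => P x /\ Q x).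
Proof.
move=> [K1 h1] [K2 h2]; exists (maxn K1 K2) => x hx; split.
  by apply: h1; apply: le_trans hx; rewrite lez_nat leq_maxl.
by apply: h2; apply: le_trans hx; rewrite lez_nat leq_maxr.
Qed.

Lemma ev_trunc (C : numFieldType) (V : VOA C) (u w : V) : ev (fun x => vmode V u x w = 0).
Proof.
have [N hN] := vmode_trunc u w; exists `|N|%N => x hx; apply: hN.
apply: le_trans hx; rewrite abszE; exact: ler_norm.
Qed.

Lemma in_split (T : eqType) (x : T) (s : seq T) : x \in s -> exists p1 p2, s = p1 ++ x :: p2.
Proof. by case/splitPr => p1 p2; exists p1, p2. Qed.
Lemma fsumD (M : nmodType) (I : choiceType) (a b : I -> M) (r1 r2 : seq I) :
  uniq r1 -> uniq r2 -> (forall x, x \notin r1 -> a x = 0) -> (forall x, x \notin r2 -> b x = 0) ->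
  fsum (fun x => a x + b x) = \sum_(x <- r1) a x + \sum_(x <- r2) b x.
Proof.
move=> u1 u2 ha hb.
have hr : forall x, x \notin r1 ++ r2 -> a x = 0 /\ b x = 0.
  by move=> x; rewrite mem_cat negb_or => /andP[h1 h2]; split; [apply: ha|apply: hb].
rewrite (fsumE' (r := r1 ++ r2)); last by move=> x /hr [-> ->]; rewrite addr0.
rewrite big_split /= -!fsumE'; try by move=> x /hr [].
by rewrite (fsumE u1 ha) (fsumE u2 hb).
Qed.

Lemma sum_widen (M : nmodType) (F : nat -> M) K1 K2 : (K1 <= K2)%N ->
  (forall j, (K1 <= j)%N -> F j = 0) -> \sum_(j < K1) F j = \sum_(j < K2) F j.
Proof.
move=> hK h; rewrite -(fsum_nat h) (fsum_nat (K := K2)) // => j hj; apply: h.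
exact: leq_trans hK hj.
Qed.

Section Main.
Variables (C : numFieldType) (V : VOA C) (B : V -> V -> C).
Hypothesis hB : invariant_bilinear_form B.
Variables (u : V) (N : nat).
Hypotheses (hwt : has_weight N u) (hqp : quasiprimary u) (hN : (1 <= N)%N).
Variables (f : nat -> int -> C).
Hypothesis hf : forall l : nat, (l < N.*2.-1)%N -> laurent (f l).
Variables (t n : nat) (vs : 'I_n.+1 -> V) (e : 'I_n.+1 -> int).

Definition LL := enum 'I_n.+1.
Definition LL' := map (lift ord0) (enum 'I_n).
Lemma LL_eq : LL = ord0 :: LL'.
Proof. by rewrite /LL enum_ordSl. Qed.
Lemma LL_uniq : uniq LL.
Proof. exact: enum_uniq. Qed.
Lemma LL'_uniq : uniq LL'.
Proof. by have := LL_uniq; rewrite LL_eq cons_uniq => /andP[]. Qed.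
Lemma ord0_notin : ord0 \notin LL'.
Proof. by have := LL_uniq; rewrite LL_eq cons_uniq => /andP[]. Qed.
Lemma memLL k : k \in LL.
Proof. by rewrite /LL mem_enum. Qed.
Lemma memLL' k : k != ord0 -> k \in LL'.
Proof. by move=> hk; have := memLL k; rewrite LL_eq in_cons (negbTE hk). Qed.
Lemma LL'_neq k : k \in LL' -> k != ord0.
Proof. by move=> hk; apply: contraNneq ord0_notin => <-. Qed.

Definition ms := fun x => - e x - 1.
Definition m0 := ms ord0.
Definition vsk (j : nat) k := upd vs k (vmode V u j%:Z (vs k)).
Definition GG (j : nat) k (al be : int) :=
  B (vacuum V) (PL (vsk j k) (upd (upd ms ord0 al) k be) LL).
Definition R0 := PL vs ms LL'.
Definition M := (N.*2).-1.
Definition D (l : nat) (a : int) := derL t (f l) a.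
Definition kap (i : nat) : C := (-1) ^+ t * 'C(i + t, t)%:R.

Lemma Z0_PL vs' e' : Z0 B vs' e' = B (vacuum V) (PL vs' (fun x => - e' x - 1) LL).
Proof. by []. Qed.

Lemma Z0_G2 j k a b : Z0 B (vsk j k) (upd (upd e ord0 (e ord0 - a)) k (e k - b)) = GG j k (m0 + a) (ms k + b).
Proof.
rewrite Z0_PL /GG; congr (B _ (PL _ _ _)); apply: funext => x.
rewrite /upd /m0 /ms; case: (x == k); first by ring.
by case: (x == ord0) => //; ring.
Qed.

Lemma Z0_G1 j a X : Z0 B (vsk j ord0) (upd e ord0 (e ord0 - a)) = GG j ord0 X (m0 + a).
Proof.
rewrite Z0_PL /GG; congr (B _ (PL _ _ _)); apply: funext => x.
rewrite /upd /m0 /ms; case: (x == ord0); first by ring. by [].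
Qed.

Lemma GG0_indep j al al' be : GG j ord0 al be = GG j ord0 al' be.
Proof.
rewrite /GG; congr (B _ (PL _ _ _)); apply: funext => x.
by rewrite /upd; case: (x == ord0).
Qed.

Lemma PL_vs0 (vs' : 'I_n.+1 -> V) ms' k : vs' k = 0 -> PL vs' ms' LL = 0.
Proof.
move=> h; have [p1 [p2 ->]] := in_split (memLL k).
by apply: PL_zero; rewrite h vmode0l.
Qed.

Lemma GG_vs0 j k al be : vmode V u j%:Z (vs k) = 0 -> GG j k al be = 0.
Proof. by move=> h; rewrite /GG (@PL_vs0 _ _ k) ?B0r // /vsk upd_eq. Qed.

Lemma PL_head (vs' : 'I_n.+1 -> V) ms' : PL vs' ms' LL = vmode V (vs' ord0) (ms' ord0) (PL vs' ms' LL').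
Proof. by rewrite LL_eq. Qed.

Lemma GG_head j k al be : k != ord0 ->
  GG j k al be = B (vacuum V) (vmode V (vs ord0) al (PL (vsk j k) (upd ms k be) LL')).
Proof.
move=> hk; rewrite /GG PL_head /vsk upd_neq 1?eq_sym // upd_neq 1?eq_sym // upd_eq.
congr (B _ (vmode V _ _ _)); apply: PL_eq => // z hz.
rewrite /upd; case: (z == k) => //.
by rewrite (negbTE (LL'_neq hz)).
Qed.

Lemma GG_head0 j al be :
  GG j ord0 al be = B (vacuum V) (vmode V (vmode V u j%:Z (vs ord0)) be R0).
Proof.
rewrite /GG PL_head /vsk !upd_eq /R0.
congr (B _ (vmode V _ _ _)); apply: PL_eq => z hz; by rewrite /upd (negbTE (LL'_neq hz)).
Qed.

Lemma GG_mid k : k != ord0 -> exists p2 : seq 'I_n.+1, forall j al be,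
  vmode V (vmode V u j%:Z (vs k)) be (PL vs ms p2) = 0 -> GG j k al be = 0.
Proof.
move=> hk; have [p1 [p2 hL]] := in_split (memLL' hk).
exists p2 => j al be h; rewrite /GG LL_eq hL -cat_cons PL_zero ?B0r //.
have := LL'_uniq; rewrite hL cat_uniq cons_uniq => /and3P[_ _ /andP[hk2 _]].
rewrite /vsk !upd_eq -h; congr (vmode V _ _ _); apply: PL_eq => z hz.
  by rewrite upd_neq //; apply: contraNneq hk2 => <-.
have hz0 : z != ord0 by apply: LL'_neq; rewrite hL mem_cat in_cons hz !orbT.
rewrite upd_neq; last by apply: contraNneq hk2 => <-.
by rewrite upd_neq.
Qed.


Lemma binC2 a b : 'C(a + b, a) = 'C(a + b, b).
Proof. by rewrite -bin_sub ?leq_addr // addKn. Qed.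

Lemma coef_lhs (i : nat) :
  - (((-1) ^+ i * binz C (- t%:Z - 1) i) * (-1) ^+ `|(- t%:Z - 1)|%N) = kap i.
Proof.
have -> : `|(- t%:Z - 1)|%N = t.+1 by rewrite -opprD abszN; lia.
rewrite binz_neg signrMK /kap exprS.
have -> : 'C(i + t, t) = 'C(t + i, i).
  by rewrite addnC binC2.
by rewrite mulN1r mulrN opprK mulrC.
Qed.

Lemma LHS_form (K : nat) :
  (forall i, (K <= i)%N -> vmode V (vs ord0) (m0 + i%:Z) R0 = 0) ->
  (forall i, (K <= i)%N -> vmode V u i%:Z R0 = 0) ->
  Z0 B (upd vs ord0 (vmode V u (- t%:Z - 1) (vs ord0))) e =
  \sum_(k <- LL') \sum_(i < K) \sum_(j < K)
     kap i * 'C(i, j)%:R * GG j k (m0 - t%:Z - 1 - i%:Z) (ms k + i%:Z - j%:Z).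
Proof.
move=> h1 h2.
rewrite Z0_PL PL_head upd_eq.
have -> : PL (upd vs ord0 (vmode V u (- t%:Z - 1) (vs ord0))) (fun x => - e x - 1) LL' = R0.
  by apply: PL_eq => // z hz; rewrite upd_neq // LL'_neq.
rewrite assoc (fsum_nat (K := K)); last first.
  move=> i hi; rewrite h2 // vmode0r scaler0 subr0.
  by rewrite (_ : - e ord0 - 1 + i%:Z = m0 + i%:Z) // h1 // vmode0r scaler0.
rewrite Bsumr // exchange_big /=; apply: eq_bigr => i _.
rewrite Bscaler // Bsubr // (@B_vac_u _ _ _ hB N) //; last by lia.
rewrite Bscaler // sub0r mulrN mulrA -mulNr coef_lhs.
rewrite PL_comm ?LL'_uniq // vmode_sumr Bsumr // mulr_sumr; apply: eq_big_seq => k hk.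
rewrite vmode_sumr Bsumr // mulr_sumr.
pose F := fun j : nat => kap i * 'C(i, j)%:R * GG j k (m0 - t%:Z - 1 - i%:Z) (ms k + i%:Z - j%:Z).
transitivity (\sum_(j < i.+1) F j).
  apply: eq_bigr => j _.
  rewrite /F vmode_scaler Bscaler // mulrA GG_head ?LL'_neq //.
  by congr (_ * B _ (vmode V _ _ _)); rewrite /m0 /ms; ring.
rewrite (@sum_widen _ F i.+1 K) //.
by move=> j hj; rewrite /F bin_small // mulr0 mul0r.
Qed.

Lemma big_iota0 (MM : nmodType) (K : nat) (F : nat -> MM) :
  \sum_(s <- iota 0 K) F s = \sum_(s < K) F s.
Proof. by rewrite -(big_mkord xpredT F) /index_iota subn0. Qed.

Lemma RHS_k (k : 'I_n.+1) (K : nat) (lo : int) (cnt : nat) :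
  k != ord0 ->
  (forall j, (K <= j)%N -> vmode V u j%:Z (vs k) = 0) ->
  (forall j (s : nat) al, (K <= s)%N -> GG j k al (ms k + s%:Z - j%:Z) = 0) ->
  (forall j (l : nat) a, (l < M)%N -> a \notin irange lo cnt ->
       D l a * GG j k (m0 + a) (ms k + l%:Z - j%:Z) = 0) ->
  fsum (fun j : nat => mul2 ord0 k (der2 t j (psi0 N f)) (Z0 B (vsk j k)) e) =
  \sum_(i < K) \sum_(j < K) kap i * 'C(i, j)%:R * GG j k (m0 - t%:Z - 1 - i%:Z) (ms k + i%:Z - j%:Z)
  + \sum_(j < K) \sum_(a <- irange lo cnt) \sum_(l < M) D l a * 'C(l, j)%:R * GG j k (m0 + a) (ms k + l%:Z - j%:Z).
Proof.
move=> hk b1 b2 b3.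
rewrite (fsum_nat (K := K)); last first.
  move=> j hj; apply: fsum0 => ab.
  by rewrite Z0_PL (@PL_vs0 _ _ k) ?B0r ?mulr0 // /vsk upd_eq b1.
rewrite [X in _ = X + _]exchange_big /= -big_split /=; apply: eq_bigr => j _.
rewrite /mul2.
pose g1 := fun ab : int * int => der2 t j (inv_xy C) ab.1 ab.2 * GG j k (m0 + ab.1) (ms k + ab.2).
pose g2 := fun ab : int * int => \sum_(l < M) D l ab.1 * (binz C (ab.2 + j%:Z) j * monoL C l%:Z (ab.2 + j%:Z))
   * GG j k (m0 + ab.1) (ms k + ab.2).
rewrite (@fsum_eq _ _ _ (fun ab => g1 ab + g2 ab)); last first.
  case=> a b /=; rewrite Z0_G2 /g1 /g2 /der2 /psi0 /= mulrDr mulrDl mulr_sumr mulr_suml.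
  congr (_ + _); apply: eq_bigr => l _; rewrite /D /derL; ring.
pose r1 := [seq (- s%:Z - 1 - t%:Z, s%:Z - j%:Z) | s <- iota 0 K].
pose r2 := [seq (a, l%:Z - j%:Z) | a <- irange lo cnt, l <- iota 0 M].
rewrite (@fsumD _ _ g1 g2 r1 r2).
- congr (_ + _).
    rewrite big_map big_iota0; apply: eq_bigr => s _.
    rewrite /g1 /der2 /inv_xy /=.
    have -> : - s%:Z - 1 - t%:Z + t%:Z = - s%:Z - 1 by ring.
    rewrite subrK eqxx le0z_nat /= binz_neg binz_nat mulr1 /kap.
    by congr (_ * GG _ _ _ _); [rewrite /m0 /ms; ring | rewrite addrA].
  rewrite big_allpairs_dep; apply: eq_bigr => a _.
  rewrite big_iota0; apply: eq_bigr => l _.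
  rewrite /g2 /= subrK (bigD1 l) //= big1 ?addr0; last first.
    move=> l' hl'; rewrite /monoL eqz_nat.
    by rewrite (_ : (val l == val l') = false) ?mulr0 ?mul0r // (inj_eq val_inj) eq_sym (negbTE hl').
  by rewrite /monoL eqxx mulr1 binz_nat addrA.
- by rewrite map_inj_uniq ?iota_uniq // => s1 s2 [h _]; lia.
- apply: allpairs_uniq; [exact: irange_uniq | exact: iota_uniq |].
  by move=> [a1 l1] [a2 l2] _ _ /= [-> h]; congr (_, _); lia.
- move=> [a b] hnot; rewrite /g1 /der2 /inv_xy /=.
  case: ifP => [/andP[h0 /eqP h1]|_]; last by rewrite !mulr0 mul0r.
  have hs : b + j%:Z = (absz (b + j%:Z))%:Z by rewrite abszE ger0_norm.
  move: hs h1 hnot; set s := absz (b + j%:Z) => hs h1 hnot.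
  have hb : b = s%:Z - j%:Z by lia.
  have ha : a = - s%:Z - 1 - t%:Z by lia.
  case: (ltnP s K) => hsK.
    by move: hnot; rewrite hb ha => /negP; case; apply/mapP; exists s; rewrite // mem_iota.
  by rewrite hb addrA b2 // mulr0.
- move=> [a b] hnot; rewrite /g2 /=; apply: big1 => l _.
  rewrite /monoL; case: eqP => [hb|_]; last by rewrite !mulr0 mul0r.
  have hb' : b = l%:Z - j%:Z by rewrite -hb addrK.
  have ha : a \notin irange lo cnt.
    apply: contra hnot => ha; apply/allpairsP; exists (a, val l) => /=.
    by split => //; [rewrite mem_iota /= ltn_ord | rewrite hb'].
  have := b3 j l a (ltn_ord l) ha => h0.
  by rewrite hb' addrA mulr1 mulrAC h0 mul0r.
Qed.

Lemma calE_eval (j : nat) (a : int) :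
  calE N f t j a = \sum_(l < M) D l (a - l%:Z + j%:Z) * 'C(l, j)%:R.
Proof.
rewrite /calE; apply: eq_bigr => l _; rewrite /mulL.
rewrite (fsumE (r := [:: a - l%:Z + j%:Z])) //; last first.
  move=> c; rewrite mem_seq1 => hc; rewrite /derL /monoL.
  case: eqP => h; last by rewrite !mulr0.
  by exfalso; move/eqP: hc; apply; lia.
rewrite big_seq1 /derL /monoL.
have -> : a - (a - l%:Z + j%:Z) + j%:Z = l%:Z by ring.
by rewrite eqxx mulr1 binz_nat.
Qed.

Lemma E_form (K : nat) (lo : int) (cnt : nat) :
  (forall j, (K <= j)%N -> vmode V u j%:Z (vs ord0) = 0) ->
  (forall j (l : nat) a, (j < K)%N -> (l < M)%N -> a \notin irange (lo - K%:Z) (cnt + K) ->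
      D l (a - l%:Z + j%:Z) * GG j ord0 0 (m0 + a) = 0) ->
  (forall j (l : nat) c, (j < K)%N -> (l < M)%N -> c \notin irange lo cnt ->
      D l c * GG j ord0 (m0 + c) (m0 + c + l%:Z - j%:Z) = 0) ->
  fsum (fun j : nat => mul1 ord0 (calE N f t j) (Z0 B (vsk j ord0)) e) =
  \sum_(j < K) \sum_(c <- irange lo cnt) \sum_(l < M)
     D l c * 'C(l, j)%:R * GG j ord0 (m0 + c) (m0 + c + l%:Z - j%:Z).
Proof.
move=> e1 e2 e3.
rewrite (fsum_nat (K := K)); last first.
  move=> j hj; apply: fsum0 => a.
  by rewrite Z0_PL (@PL_vs0 _ _ ord0) ?B0r ?mulr0 // /vsk upd_eq e1.
apply: eq_bigr => j _; rewrite /mul1.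
pose h := fun (l : nat) (a : int) => D l (a - l%:Z + j%:Z) * 'C(l, j)%:R * GG j ord0 0 (m0 + a).
rewrite (@fsum_eq _ _ _ (fun a => \sum_(l < M) h l a)); last first.
  by move=> a; rewrite calE_eval (Z0_G1 _ _ 0) mulr_suml.
rewrite (@fsum_irange _ (lo - K%:Z) (cnt + K)); last first.
  move=> a ha; apply: big1 => l _.
  by rewrite /h mulrAC e2 ?mul0r ?ltn_ord ?mem_irange.
rewrite exchange_big [RHS]exchange_big /=; apply: eq_bigr => l _.
rewrite -(@fsum_irange _ (lo - K%:Z) (cnt + K)); last first.
  by move=> a ha; rewrite /h mulrAC e2 ?mul0r ?ltn_ord ?mem_irange.
rewrite -(fsum_shift (l%:Z - j%:Z)) (@fsum_irange _ lo cnt); last first.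
  move=> c hc; rewrite /h.
  have -> : c + (l%:Z - j%:Z) - l%:Z + j%:Z = c by ring.
  by rewrite (GG0_indep _ _ (m0 + c)) addrA mulrAC addrA e3 ?mul0r ?ltn_ord ?mem_irange.
apply: eq_bigr => c _; rewrite /h.
have -> : c + (l%:Z - j%:Z) - l%:Z + j%:Z = c by ring.
by rewrite (GG0_indep _ _ (m0 + c)) !addrA.
Qed.

Lemma sum_LL (MM : nmodType) (F : 'I_n.+1 -> MM) :
  \sum_(k <- LL) F k = F ord0 + \sum_(k <- LL') F k.
Proof. by rewrite LL_eq big_cons. Qed.

Lemma comm_zero (l : nat) (c : int) (K : nat) : (l < M)%N -> (M <= K)%N ->
  \sum_(j < K) ('C(l, j)%:R * GG j ord0 (m0 + c) (m0 + c + l%:Z - j%:Z)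
     + \sum_(k <- LL') 'C(l, j)%:R * GG j k (m0 + c) (ms k + l%:Z - j%:Z)) = 0.
Proof.
move=> hl hK.
transitivity (B (vacuum V) (vmode V u l%:Z (PL vs (upd ms ord0 (m0 + c)) LL))); last first.
  apply: (@B_vac_u _ _ _ hB N) => //; move: hl; rewrite /M -muln2; lia.
rewrite PL_comm ?LL_uniq // sum_LL Baddr // !Bsumr // big_split /=.
have hlK : (l.+1 <= K)%N by apply: leq_trans hK.
congr (_ + _).
  pose F := fun j : nat => 'C(l, j)%:R * GG j ord0 (m0 + c) (m0 + c + l%:Z - j%:Z).
  rewrite -(@sum_widen _ F l.+1 K) //; last by move=> j hj; rewrite /F bin_small // mul0r.
  by apply: eq_bigr => j _; rewrite /F Bscaler // upd_eq.
rewrite exchange_big /=; apply: eq_big_seq => k hk.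
rewrite Bsumr //.
pose F := fun j : nat => 'C(l, j)%:R * GG j k (m0 + c) (ms k + l%:Z - j%:Z).
rewrite -(@sum_widen _ F l.+1 K) //; last by move=> j hj; rewrite /F bin_small // mul0r.
by apply: eq_bigr => j _; rewrite /F Bscaler // upd_neq // LL'_neq.
Qed.

Lemma ED_zero (K : nat) (A : seq int) : (M <= K)%N ->
  \sum_(j < K) \sum_(c <- A) \sum_(l < M)
     D l c * 'C(l, j)%:R * GG j ord0 (m0 + c) (m0 + c + l%:Z - j%:Z)
  + \sum_(k <- LL') \sum_(j < K) \sum_(a <- A) \sum_(l < M)
     D l a * 'C(l, j)%:R * GG j k (m0 + a) (ms k + l%:Z - j%:Z) = 0.
Proof.
move=> hK.
rewrite [X in _ + X]exchange_big /=.
under [X in _ + X]eq_bigr => j _ do rewrite exchange_big /=.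
under [X in _ + X]eq_bigr => j _ do under eq_bigr => a _ do rewrite exchange_big /=.
rewrite -big_split /=.
under eq_bigr => j _ do rewrite -big_split /=.
under eq_bigr => j _ do under eq_bigr => c _ do rewrite -big_split /=.
rewrite exchange_big /=; apply: big1 => c _.
rewrite exchange_big /=; apply: big1 => l _.
transitivity (D l c * \sum_(j < K) ('C(l, j)%:R * GG j ord0 (m0 + c) (m0 + c + l%:Z - j%:Z)
     + \sum_(k <- LL') 'C(l, j)%:R * GG j k (m0 + c) (ms k + l%:Z - j%:Z))).
  rewrite mulr_sumr; apply: eq_bigr => j _.
  rewrite mulrDr mulr_sumr mulrA; congr (_ + _).
  by apply: eq_bigr => k _; rewrite mulrA.
by rewrite comm_zero ?mulr0 // ltn_ord.
Qed.

Lemma sumLL' (MM : nmodType) (F : 'I_n.+1 -> MM) :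
  \sum_(k < n.+1 | k != ord0) F k = \sum_(k <- LL') F k.
Proof.
rewrite big_mkcond big_ord_recl eqxx /LL' big_map big_enum /= add0r.
by apply: eq_bigl => i.
Qed.

Lemma main_e :
  Z0 B (upd vs ord0 (vmode V u (- t%:Z - 1) (vs ord0))) e =
  fsum (fun j : nat => mul1 ord0 (calE N f t j) (Z0 B (vsk j ord0)) e)
  + \sum_(k < n.+1 | k != ord0)
      fsum (fun j : nat => mul2 ord0 k (der2 t j (psi0 N f)) (Z0 B (vsk j k)) e).
Proof.
have [H1 hH1] := ev_trunc (vs ord0) R0.
have [H2 hH2] := ev_trunc u R0.
have [J hJ] : ev (fun x => forall k, k \in LL -> vmode V u x (vs k) = 0).
  by apply: ev_seq => k _; exact: ev_trunc.
have hJ' : forall j k, (J <= j)%N -> vmode V u j%:Z (vs k) = 0.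
  by move=> j k hj; apply: hJ (memLL k); rewrite lez_nat.
have [Kl hKl] : ev (fun x => forall l, l \in iota 0 M -> forall m, m < - x -> f l m = 0).
  apply: ev_seq => l; rewrite mem_iota add0n => /andP[_ hl].
  have [Ml hMl] := hf hl.
  exists `|Ml|%N => x hx m hm; apply: hMl; lia.
pose lo := - Kl%:Z - t%:Z.
have hD : forall (l : nat) c, (l < M)%N -> c < lo -> D l c = 0.
  move=> l c hl hc; rewrite /D /derL (hKl Kl%:Z) ?mulr0 //; first by rewrite mem_iota.
  by rewrite /lo in hc; lia.
have [H hH] : ev (fun x =>
    (forall j, j \in iota 0 J -> vmode V (vmode V u j%:Z (vs ord0)) x R0 = 0) /\
    (forall k, k \in LL' -> forall j, j \in iota 0 J -> forall l, l \in iota 0 M ->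
       vmode V (vs ord0) x (PL (vsk j k) (upd ms k (ms k + l%:Z - j%:Z)) LL') = 0)).
  apply: ev_and; first by apply: ev_seq => j _; exact: ev_trunc.
  apply: ev_seq => k _; apply: ev_seq => j _; apply: ev_seq => l _; exact: ev_trunc.
have hG0 : forall j al be, H%:Z <= be -> GG j ord0 al be = 0.
  move=> j al be hbe; case: (ltnP j J) => hj; last by apply: GG_vs0; apply: hJ'.
  by rewrite GG_head0 (proj1 (hH be hbe)) ?B0r // mem_iota.
have hGk : forall k j (l : nat) al, k \in LL' -> (l < M)%N -> H%:Z <= al ->
    GG j k al (ms k + l%:Z - j%:Z) = 0.
  move=> k j l al hk hl hal; case: (ltnP j J) => hj; last by apply: GG_vs0; apply: hJ'.
  by rewrite GG_head ?LL'_neq // (proj2 (hH al hal)) ?B0r // mem_iota.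
have [Ki hKi] : ev (fun x => forall k, k \in LL' -> forall j (s : nat) al, x <= s%:Z ->
    GG j k al (ms k + s%:Z - j%:Z) = 0).
  apply: ev_seq => k hk; have [p2 hp2] := GG_mid (LL'_neq hk).
  have [T hT] : ev (fun x => forall j, j \in iota 0 J ->
      vmode V (vmode V u j%:Z (vs k)) x (PL vs ms p2) = 0).
    by apply: ev_seq => j _; exact: ev_trunc.
  exists (T + `|ms k|%N + J)%N => x hx j s al hs.
  case: (ltnP j J) => hj; last by apply: GG_vs0; apply: hJ'.
  by apply: hp2; apply: hT; [lia | rewrite mem_iota].
pose K := addn (absz (H1%:Z - m0)) (H2 + J + M + Ki)%N.
pose hml : int := (Posz H) - m0 - lo.
pose cnt := addn (absz hml) K.
rewrite (@LHS_form K); first last.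
- by move=> i hi; apply: hH2; rewrite lez_nat; rewrite /K in hi; lia.
- by move=> i hi; apply: hH1; rewrite /K in hi; lia.
rewrite (@E_form K lo cnt); first last.
- move=> j l c hj hl; rewrite mem_irange negb_and -ltNge -leNgt => /orP[h|h].
    by rewrite hD ?mul0r.
  move: h; rewrite /cnt /hml /lo => h; rewrite hG0 ?mulr0 //; lia.
- move=> j l a hj hl; rewrite mem_irange negb_and -ltNge -leNgt => /orP[h|h].
    by rewrite hD ?mul0r //; lia.
  move: h; rewrite /cnt /hml /lo => h; rewrite hG0 ?mulr0 //; lia.
- by move=> j hj; apply: hJ'; rewrite /K in hj; lia.
rewrite sumLL'.
transitivity (\sum_(j < K) \sum_(c <- irange lo cnt) \sum_(l < M)
     D l c * 'C(l, j)%:R * GG j ord0 (m0 + c) (m0 + c + l%:Z - j%:Z)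
  + \sum_(k <- LL') (\sum_(i < K) \sum_(j < K) kap i * 'C(i, j)%:R * GG j k (m0 - t%:Z - 1 - i%:Z) (ms k + i%:Z - j%:Z)
  + \sum_(j < K) \sum_(a <- irange lo cnt) \sum_(l < M) D l a * 'C(l, j)%:R * GG j k (m0 + a) (ms k + l%:Z - j%:Z))); last first.
  congr (_ + _); apply: eq_big_seq => k hk.
  rewrite (@RHS_k k K lo cnt) ?LL'_neq //.
  - by move=> j hj; apply: hJ'; rewrite /K in hj; lia.
  - by move=> j s al hs; apply: hKi => //; rewrite /K in hs; lia.
  - move=> j l a hl; rewrite mem_irange negb_and -ltNge -leNgt => /orP[h|h].
      by rewrite hD ?mul0r.
    move: h; rewrite /cnt /hml /lo => h; rewrite hGk ?mulr0 //; lia.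
rewrite big_split /= addrCA (@ED_zero K) ?addr0 //.
by rewrite /K; lia.
Qed.
End Main.

Local Close Scope classical_set_scope.

Theorem mainTheorem3 (R : realType) (V : VOA R[i]) (B : V -> V -> R[i])
  (hCFT : strong_CFT_type V) (hsimple : simple_VOA V)
  (hB : invariant_bilinear_form B) (hnd : nondegenerate_form B)
  (hB1 : B (vacuum V) (vacuum V) = 1)
  (u : V) (N : nat) (hN : (1 <= N)%N)
  (hwt : has_weight N u) (hqp : quasiprimary u)
  (f : nat -> int -> R[i]) (hf : forall l : nat, (l < N.*2.-1)%N -> laurent (f l))
  (t : nat) (n : nat) (vs : 'I_n.+1 -> V) :
  Z0 B (upd vs ord0 (vmode V u (- t%:Z - 1) (vs ord0)))
  = fun e : 'I_n.+1 -> int =>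
      fsum (fun j : nat =>
        mul1 ord0 (calE N f t j) (Z0 B (upd vs ord0 (vmode V u j%:Z (vs ord0)))) e)
      + \sum_(k < n.+1 | k != ord0)
          fsum (fun j : nat =>
            mul2 ord0 k (der2 t j (psi0 N f))
                 (Z0 B (upd vs k (vmode V u j%:Z (vs k)))) e).
Proof.
apply: funext => e.
exact: (@main_e _ V B hB u N hwt hqp hN f hf t n vs e).
Qed.
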